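(* Let $n\ge2$, $\sigma\ge2$, and let $s$ be a random string of length $n$ with characters i.i.d. uniform over an alphabet of size $\sigma$; let $k$ be the number of tokens of $\mathcal{F}(s)$. Put $p=(\sigma-1)/\sigma$, $m=n-1$, $q=(2-\sigma)/\sigma$. Then \[\mathrm{Var}[k]=\frac{mp(1-p)}{4}-\frac{mp(1-p)\,q^{m-1}}{2}+\frac{1-q^{2m}}{16}.\] In particular $\mathrm{Var}[k]=0$ when $n=2$, and $\mathrm{Var}[k]-(n-1)(\sigma-1)/(4\sigma^2)$ is bounded independently of $n$.
   Context: Let $\texttt{@},\texttt{\$}$ be two distinct symbols not in the alphabet. For a string $s$ of length $n$ let $\hat s=\texttt{@}\,s\,\texttt{\$}$ (positions $1,\dots,n+2$); $\hat s[i..j)$ is the substring at positions $i,\dots,j-1$. The leading (trailing) run of a non-empty string is its longest prefix (suffix) consisting of one repeated symbol. The Flashback decomposition $\mathcal{F}(s)$ is the sequence of tokens (pairs $(\sigma,p)$) produced as follows, starting from active span $[lo,hi)=[1,n+3)$: if $lo\ge hi$, stop. Let $\ell$ be the leading-run length of $\hat s[lo..hi)$. If $\ell=hi-lo$, append $(\hat s[lo..hi),0)$ and stop. Otherwise let $\hat s[r..hi)$ be the trailing run of $\hat s[lo..hi)$ and $\sigma=\hat s[lo..lo+\ell)\cdot\hat s[r..hi)$; if $lo+\ell\ge r$, append $(\sigma,0)$ and stop; otherwise append $(\sigma,\ell)$ and repeat with $[lo+\ell,r)$. *)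

(* Defs.v *)
From mathcomp Require Import all_boot all_order all_algebra.
Set Implicit Arguments. Unset Strict Implicit. Unset Printing Implicit Defensive.
Import Order.TTheory GRing.Theory Num.Theory.

(* Symbols are encoded as naturals: the alphabet of size sigma is {0,..,sigma-1},
   '@' is encoded by sigma and '$' by sigma+1 (two distinct symbols not in the alphabet). *)

Definition lead_run (w : seq nat) : nat :=
  match w with
  | [::] => 0
  | x :: t => (find (fun y => y != x) t).+1
  end.

Definition trail_run (w : seq nat) : nat := lead_run (rev w).

(* Flashback decomposition of the active span w (= \hat s[lo..hi)), with fuel. *)
Fixpoint flashback_aux (fuel : nat) (w : seq nat) : seq (seq nat * nat) :=
  match fuel with
  | 0 => [::]
  | fuel'.+1 =>
    if w is [::] then [::] else
    let l := lead_run w in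
    if l == size w then [:: (w, 0)] else
    let r := size w - trail_run w in
    let sg := take l w ++ drop r w in
    if r <= l then [:: (sg, 0)]
    else (sg, l) :: flashback_aux fuel' (drop l (take r w))
  end.

Definition flashback (w : seq nat) := flashback_aux (size w).+1 w.

Definition hat (sigma : nat) (s : seq nat) : seq nat := sigma :: s ++ [:: sigma.+1].

Definition ntokens (sigma n : nat) (s : n.-tuple 'I_sigma) : nat :=
  size (flashback (hat sigma (map val s))).

Local Open Scope ring_scope.

(* expectation / variance under the uniform distribution on strings of length n
   (i.i.d. uniform characters) *)
Definition Expect (sigma n : nat) (X : n.-tuple 'I_sigma -> rat) : rat :=
  (\sum_(s : n.-tuple 'I_sigma) X s) / #|{: n.-tuple 'I_sigma}|%:R.

Definition Var (sigma n : nat) (X : n.-tuple 'I_sigma -> rat) : rat :=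
  Expect (fun s => X s ^+ 2) - (Expect X) ^+ 2.

Definition var_k (sigma n : nat) : rat :=
  Var (fun s : n.-tuple 'I_sigma => (ntokens s)%:R).

(* Main.v *)
Require Import Defs.
From mathcomp Require Import all_boot all_order all_algebra.
From mathcomp Require Import zify ring lra.
Import Order.TTheory GRing.Theory Num.Theory.

Fixpoint nchg (w : seq nat) : nat :=
  match w with
  | x :: ((y :: _) as t) => (x != y) + nchg t
  | _ => 0
  end.

Lemma nchg_nseq k x : nchg (nseq k x) = 0.
Proof. by elim: k => [|[|k] IH] //=; rewrite eqxx. Qed.

Lemma nchg_cons2 x z s : nchg (x :: z :: s) = (x != z) + nchg (z :: s).
Proof. by []. Qed.

Lemma nchg_cat a b : a != [::] -> b != [::] ->
  nchg (a ++ b) = nchg a + nchg b + (last 0 a != head 0 b).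
Proof.
case: a => [|x a] // _; case: b => [|y b] // _.
elim: a x => [|z a IH] x; first by rewrite /= addnC.
rewrite !cat_cons nchg_cons2 -cat_cons IH nchg_cons2 /=; lia.
Qed.

Lemma nchg_cat_le a b : nchg (a ++ b) <= nchg a + nchg b + 1.
Proof.
case: a => [|x a]; first by rewrite /=; lia.
case: b => [|y b]; first by rewrite cats0; lia.
by rewrite nchg_cat //; case: (last 0 (x :: a) != head 0 (y :: b)); lia.
Qed.

Lemma take_find_nseq (y : nat) (t : seq nat) :
  take (find (fun z => z != y) t) t = nseq (find (fun z => z != y) t) y.
Proof.
elim: t => [|z t IH] //=; case: eqP => [->|] //=; by rewrite IH.
Qed.

Lemma lead_take (y : nat) t : take (lead_run (y :: t)) (y :: t) = nseq (lead_run (y :: t)) y.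
Proof. by rewrite /= take_find_nseq. Qed.

Lemma lead_nth (y : nat) t : lead_run (y :: t) < size (y :: t) ->
  nth 0 (y :: t) (lead_run (y :: t)) != y.
Proof.
rewrite /= ltnS -has_find => H.
by have := nth_find 0 H.
Qed.

Lemma lead_size (y : nat) t : lead_run (y :: t) <= size (y :: t).
Proof. by rewrite /= ltnS find_size. Qed.

Lemma rev_head (x : nat) t : rev (x :: t) = last x t :: behead (rev (x :: t)).
Proof. by rewrite rev_cons; case/lastP: t => [|t' z] //; rewrite rev_rcons last_rcons. Qed.

Lemma last_nseq_pos n (x : nat) : 0 < n -> last 0 (nseq n x) = x.
Proof. by case: n => // n _; elim: n => // n IH; rewrite -IH. Qed.

Lemma head_nseq_pos n (x : nat) : 0 < n -> head 0 (nseq n x) = x.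
Proof. by case: n. Qed.

Lemma fb_unfold fuel w : w != [::] -> flashback_aux fuel.+1 w =
    let l := lead_run w in if l == size w then [:: (w, 0)] else
    let r := size w - trail_run w in
    let sg := take l w ++ drop r w in
    if r <= l then [:: (sg, 0)]
    else (sg, l) :: flashback_aux fuel (drop l (take r w)).
Proof. by case: w. Qed.

Lemma fb_size fuel w : w != [::] -> size w < fuel ->
  size (flashback_aux fuel w) = (nchg w)./2 + 1.
Proof.
elim: fuel w => [|fuel IH] w //.
case: w => [|x t] // _ Hs.
rewrite fb_unfold //; cbv zeta.
set w := x :: t.
set l := lead_run w.
set tr := trail_run w.
have Hl1 : 0 < l by [].
have Hls : l <= size w by apply: lead_size.
have Htake : take l w = nseq l x by apply: lead_take.
case: (l =P size w) => Hl.
  have : w = nseq l x by rewrite -Htake Hl take_size.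
  move=> E; have -> : nchg w = 0 by rewrite E nchg_nseq. by [].
have Hlt : l < size w by rewrite ltn_neqAle Hls andbT; apply/eqP.
have Hrw : rev w = last x t :: behead (rev w).
  exact: rev_head.
have Htr1 : 0 < tr by rewrite /tr /trail_run Hrw.
have Htrs : tr <= size w.
  by rewrite /tr /trail_run -size_rev Hrw; apply: lead_size.
have Hdrop : drop (size w - tr) w = nseq tr (last x t).
  apply: (can_inj revK); rewrite rev_nseq -take_rev.
  rewrite /tr /trail_run Hrw; apply: lead_take.
set r := size w - tr.
case: leqP => Hrl.
  suff H : nchg w <= 1 by move: H; case: (nchg w) => [|[|]].
  rewrite -[w](cat_take_drop l).
  have -> : drop l w = nseq (tr - (l - r)) (last x t).
    by rewrite -{1}(subnK Hrl) -drop_drop Hdrop drop_nseq.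
  rewrite Htake.
  have := nchg_cat_le (nseq l x) (nseq (tr - (l - r)) (last x t)).
  rewrite !nchg_nseq /=.
  by case: (nchg _) => [|[|c]].
set M := drop l (take r w).
have HsM : size M = r - l by rewrite /M size_drop size_take; case: ltnP; lia.
have HM0 : M != [::] by rewrite -size_eq0 HsM; lia.
have Hsw : size w <= fuel by [].
have HMf : size M < fuel by rewrite HsM /r; lia.
rewrite [size (_ :: _)]/= IH //.
suff -> : nchg w = (nchg M).+2 by [].
have Hw : w = take l w ++ (M ++ drop r w).
  by rewrite catA -{1}(take_takel _ (ltnW Hrl)) cat_take_drop cat_take_drop.
have Hn1 : nseq l x != [::] by rewrite -size_eq0 size_nseq; lia.
have Hn2 : nseq tr (last x t) != [::] by rewrite -size_eq0 size_nseq; lia.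
have HMB : M ++ nseq tr (last x t) != [::] by case: (M) HM0.
rewrite Hw Htake Hdrop (nchg_cat _ _ Hn1 HMB) (nchg_cat _ _ HM0 Hn2).
rewrite !nchg_nseq.
have Hhead : head 0 M = nth 0 w l.
  by rewrite -nth0 /M nth_drop addn0 nth_take.
have Hlast : last 0 M = nth 0 w (r.-1).
  rewrite -nth_last HsM /M nth_drop nth_take; last by lia.
  by congr nth; lia.
have H1 : last 0 (nseq l x) != head 0 M.
  rewrite last_nseq_pos // Hhead eq_sym; exact: (@lead_nth x t Hlt).
have Htrlt : tr < size w.
  by move: Hrl; rewrite /r ltn_subRL => H; exact: leq_ltn_trans (leq_addr l tr) H.
have H2 : last 0 M != head 0 (nseq tr (last x t)).
  rewrite head_nseq_pos // Hlast.
  have := @lead_nth (last x t) (behead (rev w)).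
  rewrite -Hrw -/(trail_run w) -/tr size_rev nth_rev; last exact: Htrlt.
  have -> : (size w - tr.+1 = r.-1)%N by rewrite /r; lia.
  by apply.
have -> : head 0 (M ++ nseq tr (last x t)) = head 0 M by case: (M) HM0.
rewrite H1 H2 /=; lia.
Qed.

Lemma ntokens_eq sigma n (s : n.+1.-tuple 'I_sigma) :
  ntokens s = (nchg (map val s))./2 + 2.
Proof.
rewrite /ntokens /flashback fb_size // /hat.
have Hlt : forall z, z \in map val s -> z < sigma by move=> z /mapP [i _ ->]; exact: ltn_ord.
have Hsz : size (map val s) = n.+1 by rewrite size_map size_tuple.
case: (map val s) Hlt Hsz => [|y r] Hlt // _.
rewrite nchg_cons2 -cat_cons nchg_cat // [last 0 _]/= [head 0 _]/= [nchg [:: _]]/=.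
have H1 : (sigma != y) = true by rewrite eq_sym ltn_eqF // Hlt ?mem_head.
have H2 : (last y r != sigma.+1) = true.
  by rewrite ltn_eqF // ltnS ltnW // Hlt // mem_last.
rewrite H1 H2; move: (nchg (y :: r)) => c.
have E2 : (nat_of_bool true + (c + 0 + nat_of_bool true))%N = c.+2.
  by rewrite addn0 /= add1n addn1.
rewrite E2.
by rewrite /=; lia.
Qed.

Local Open Scope ring_scope.

Definition S sigma k (F : nat -> rat) :=
  \sum_(s : k.+1.-tuple 'I_sigma) F (nchg (map val s)).

Lemma nchg_cons_tuple sigma k (x : 'I_sigma) (t : k.+1.-tuple 'I_sigma) :
  nchg (val x :: map val t) = ((x != thead t) + nchg (map val t))%N.
Proof. by rewrite [t]tuple_eta theadE /=. Qed.

Lemma sum_one_out sigma (i0 : 'I_sigma) (G : nat -> rat) c :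
  \sum_(x : 'I_sigma) G ((x != i0) + c)%N = G c + (sigma - 1)%:R * G c.+1.
Proof.
rewrite (bigD1 i0) //= eqxx add0n.
rewrite (eq_bigr (fun _ => G c.+1)); last by move=> i /negbTE ->.
rewrite sumr_const cardC1 card_ord.
by rewrite subn1 mulr_natl.
Qed.

Lemma S_rec sigma k F : S sigma k.+1 F =
  S sigma k (fun c => F c + (sigma - 1)%:R * F c.+1).
Proof.
rewrite /S.
rewrite (reindex (fun p : 'I_sigma * k.+1.-tuple 'I_sigma => [tuple of p.1 :: p.2])) /=.
  rewrite -(pair_bigA _ (fun (x : 'I_sigma) (t : k.+1.-tuple 'I_sigma) => F (nchg (map val [tuple of x :: t])))) /=.
  rewrite exchange_big /=; apply: eq_bigr => t _.
  rewrite -(@sum_one_out sigma (thead t)); apply: eq_bigr => x _.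
  by rewrite -nchg_cons_tuple.
exists (fun t : k.+2.-tuple 'I_sigma => (thead t, [tuple of behead t])).
  by move=> [x t] _ /=; rewrite theadE; congr pair; apply: val_inj.
by move=> t _ /=; rewrite [t in RHS]tuple_eta.
Qed.

Lemma S_ext sigma k F G : (forall c, F c = G c) -> S sigma k F = S sigma k G.
Proof. by move=> H; apply: eq_bigr => s _. Qed.
Arguments S_ext {sigma k F} G _.

Lemma S_lin sigma k al be ga F G H :
  S sigma k (fun c => al * F c + be * G c + ga * H c) =
  al * S sigma k F + be * S sigma k G + ga * S sigma k H.
Proof. by rewrite /S !big_split /= !mulr_sumr. Qed.

Lemma S0 sigma F : S sigma 0 F = sigma%:R * F 0%N.
Proof.
rewrite /S (eq_bigr (fun _ => F 0%N)).
  by rewrite sumr_const card_tuple card_ord expn1 mulr_natl.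
by move=> s _; case: s => [[|x [|y r]] //].
Qed.

Section Moments.
Variable sigma : nat.
Hypothesis Hs : (0 < sigma)%N.
Local Notation sg := (sigma%:R : rat).
Local Notation a := ((sigma - 1)%:R : rat).
Local Notation b := (1 - (sigma - 1)%:R : rat).

Lemma Ha : a = sg - 1.
Proof. by rewrite natrB. Qed.

Lemma P0 k : S sigma k (fun _ => 1) = sg ^+ k.+1.
Proof.
elim: k => [|k IH]; first by rewrite S0 mulr1 expr1.
rewrite S_rec (S_ext (fun c => sg * 1 + 0 * 1 + 0 * 1)).
  by rewrite S_lin IH !exprS; ring.
by move=> c; rewrite Ha; ring.
Qed.

Lemma P1 k : S sigma k (fun c => c%:R) = k%:R * a * sg ^+ k.
Proof.
elim: k => [|k IH]; first by rewrite S0 !mulr0 mul0r.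
rewrite S_rec (S_ext (fun c => sg * c%:R + a * 1 + 0 * 1)).
  by rewrite S_lin IH P0 !exprS Ha -natr1; ring.
by move=> c; rewrite Ha -natr1; ring.
Qed.

Lemma P2 k : sg * S sigma k (fun c => c%:R ^+ 2) =
  k%:R * a * sg ^+ k.+1 + k%:R * (k%:R - 1) * a ^+ 2 * sg ^+ k.
Proof.
elim: k => [|k IH]; first by rewrite S0; ring.
rewrite S_rec (S_ext (fun c => sg * c%:R ^+ 2 + (2 * a) * c%:R + a * 1)).
  rewrite S_lin mulrDr mulrDr IH P0 P1 !exprS Ha -natr1; ring.
by move=> c; rewrite Ha -natr1; ring.
Qed.

Lemma E0 k : S sigma k (fun c => (-1) ^+ c) = sg * b ^+ k.
Proof.
elim: k => [|k IH]; first by rewrite S0 !expr0.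
rewrite S_rec (S_ext (fun c => b * (-1) ^+ c + 0 * 1 + 0 * 1)).
  by rewrite S_lin IH !exprS; ring.
by move=> c; rewrite !exprS; ring.
Qed.

Lemma E1z : S sigma 0 (fun c => c%:R * (-1) ^+ c) = 0.
Proof. by rewrite S0 mul0r mulr0. Qed.

Lemma E1 k : S sigma k.+1 (fun c => c%:R * (-1) ^+ c) = - sg * (k.+1)%:R * a * b ^+ k.
Proof.
elim: k => [|k IH].
  rewrite S_rec (S_ext (fun c => b * (c%:R * (-1) ^+ c) + (- a) * (-1) ^+ c + 0 * 1)).
    by rewrite S_lin E1z E0; ring.
  by move=> c; rewrite !exprS -natr1; ring.
rewrite S_rec (S_ext (fun c => b * (c%:R * (-1) ^+ c) + (- a) * (-1) ^+ c + 0 * 1)).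
  rewrite S_lin IH E0 !exprS -!natr1; ring.
by move=> c; rewrite !exprS -natr1; ring.
Qed.

End Moments.

Lemma Ec c : (c%:R : rat) = (odd c)%:R + (c./2)%:R * 2.
Proof. by rewrite -{1}(odd_double_half c) natrD -muln2 natrM. Qed.

Lemma g_eq c : ((c./2 + 2)%N%:R : rat) =
  (1/2) * c%:R + (7/4) * 1 + (1/4) * (-1) ^+ c.
Proof.
by rewrite natrD -signr_odd (Ec c); case: (odd c) => /=; field.
Qed.

Lemma g2_eq c : ((c./2 + 2)%N%:R : rat) ^+ 2 =
  1 * ((1/4) * c%:R ^+ 2 + (7/4) * c%:R + (25/8) * 1)
  + 1 * ((1/4) * (c%:R * (-1) ^+ c) + (7/8) * (-1) ^+ c + 0 * 1) + 0 * 1.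
Proof.
by rewrite natrD -signr_odd (Ec c); case: (odd c) => /=; field.
Qed.

Lemma sum_ntok sigma j (G : nat -> rat) :
  \sum_(s : j.+2.-tuple 'I_sigma) G (ntokens s) =
  S sigma j.+1 (fun c => G (c./2 + 2)%N).
Proof. by apply: eq_bigr => s _; rewrite ntokens_eq. Qed.

Lemma var_formula sigma j : (2 <= sigma)%N ->
     let p : rat := (sigma%:R - 1) / sigma%:R in
     let m : nat := (j.+2 - 1)%N in
     let q : rat := (2 - sigma%:R) / sigma%:R in
     var_k sigma j.+2 =
       m%:R * p * (1 - p) / 4 - m%:R * p * (1 - p) * q ^+ (m - 1)%N / 2
       + (1 - q ^+ (2 * m)%N) / 16.
Proof.
move=> Hs p m q; rewrite /p /m /q.
have -> : (j.+2 - 1 = j.+1)%N by lia.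
have -> : (j.+1 - 1 = j)%N by lia.
have -> : (2 * j.+1 = j + j + 2)%N by lia.
have Hs0 : (0 < sigma)%N by lia.
rewrite /var_k /Var /Expect.
rewrite (sum_ntok _ _ (fun c => c%:R)) (sum_ntok _ _ (fun c => c%:R ^+ 2)).
rewrite (S_ext _ (fun c => g_eq c)).
rewrite (S_ext _ (fun c => g2_eq c)) !S_lin.
have Hsg : (sigma%:R : rat) != 0 by rewrite pnatr_eq0 -lt0n.
have HP2 : S sigma j.+1 (fun c => c%:R ^+ 2) =
  ((j.+1)%:R * ((sigma - 1)%:R : rat) * (sigma%:R : rat) ^+ j.+2 +
   (j.+1)%:R * ((j.+1)%:R - 1) * ((sigma - 1)%:R : rat) ^+ 2 * (sigma%:R : rat) ^+ j.+1) / sigma%:R.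
  by rewrite -(P2 _ Hs0) mulrC mulKf.
rewrite HP2 (P0 _ Hs0) (P1 _ Hs0) E0 E1 card_tuple card_ord natrX.
rewrite natrB // (_ : 1 - (sigma%:R - 1%:R) = 2 - sigma%:R :> rat); last by ring.
rewrite !exprD !expr_div_n !exprS -!natr1.
have HX : (sigma%:R : rat) ^+ j != 0 by rewrite expf_neq0.
move: HX; set X := (sigma%:R : rat) ^+ j; set Y := (2 - sigma%:R : rat) ^+ j => HX.
field.
by rewrite Hsg HX.
Qed.

Lemma KL0 (r : rat) j : 0 <= r -> r <= 1 ->
  (j.+1)%:R * r ^+ j * (1 - r) <= 1 - r ^+ j.+1.
Proof.
move=> r0 r1; elim: j => [|j IH]; first by rewrite expr0 expr1 mulr1 mul1r.
have z0 : 0 <= r ^+ j by rewrite exprn_ge0.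
have z1 : r ^+ j <= 1 by rewrite exprn_ile1.
move: IH z0 z1; rewrite !exprS -!natr1; set z := r ^+ j => IH z0 z1.
have k0 : 0 <= (j%:R : rat) by rewrite ler0n.
have H1 := ler_wpM2l r0 IH.
have H2 : 0 <= (1 - r) * (1 - r * z) by apply: mulr_ge0; nra.
nra.
Qed.

Lemma KL (r : rat) j : 0 <= r -> r <= 1 -> (j.+1)%:R * r ^+ j * (1 - r) <= 1.
Proof.
move=> r0 r1; have := KL0 r j r0 r1.
have : 0 <= r ^+ j.+1 by rewrite exprn_ge0.
lra.
Qed.

Theorem corollaryA1 (sigma : nat) (Hsigma : (2 <= sigma)%N) :
  (forall n : nat, (2 <= n)%N ->
     let p : rat := (sigma%:R - 1) / sigma%:R in
     let m : nat := (n - 1)%N in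
     let q : rat := (2 - sigma%:R) / sigma%:R in
     var_k sigma n =
       m%:R * p * (1 - p) / 4 - m%:R * p * (1 - p) * q ^+ (m - 1)%N / 2
       + (1 - q ^+ (2 * m)%N) / 16)
  /\ var_k sigma 2 = 0
  /\ (exists C : rat, forall n : nat, (2 <= n)%N ->
        `|var_k sigma n - (n - 1)%:R * (sigma%:R - 1) / (4 * sigma%:R ^+ 2)| <= C).
Proof.
have Hsg : (sigma%:R : rat) != 0 by rewrite pnatr_eq0; case: sigma Hsigma.
have Hsg2 : (2 : rat) <= sigma%:R by rewrite (ler_nat _ 2).
have Hform : forall n : nat, (2 <= n)%N ->
     let p : rat := (sigma%:R - 1) / sigma%:R in
     let m : nat := (n - 1)%N in
     let q : rat := (2 - sigma%:R) / sigma%:R in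
     var_k sigma n =
       m%:R * p * (1 - p) / 4 - m%:R * p * (1 - p) * q ^+ (m - 1)%N / 2
       + (1 - q ^+ (2 * m)%N) / 16.
  by case=> [|[|j]] // _; exact: var_formula.
split; first exact: Hform.
split.
  rewrite (Hform 2%N isT) /=.
  rewrite (_ : (2 - 1 = 1)%N) // expr0 (_ : (2 * 1 = 2)%N) //.
  by field.
exists sigma%:R => n Hn.
rewrite (Hform n Hn) /=.
set p : rat := (sigma%:R - 1) / sigma%:R.
set q : rat := (2 - sigma%:R) / sigma%:R.
set m := (n - 1)%N.
have -> : (n - 1)%:R * (sigma%:R - 1) / (4 * sigma%:R ^+ 2) = m%:R * p * (1 - p) / 4.
  by rewrite /m /p; field.
have Hq : `|q| = (sigma%:R - 2) / sigma%:R.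
  rewrite /q normrM normfV ler0_norm ?ger0_norm; [by rewrite opprB| |]; lra.
set r : rat := `|q|.
have r0 : 0 <= r by rewrite normr_ge0.
have r1 : r <= 1 by rewrite /r Hq ler_pdivrMr; lra.
have Hr : 1 - r = 2 / sigma%:R by rewrite /r Hq; field.
have Hm : m = (m - 1).+1 by rewrite /m; lia.
have HK := KL r (m - 1)%N r0 r1.
rewrite -Hm Hr in HK.
set u := q ^+ (m - 1).
set ru := r ^+ (m - 1).
have Hu : `|u| = ru by rewrite /u normrX.
have ru0 : 0 <= ru by rewrite exprn_ge0.
have Hmru : m%:R * ru <= sigma%:R / 2.
  have s0 : (0 : rat) < sigma%:R by lra.
  rewrite -(ler_pM2r (_ : 0 < 2 / sigma%:R)); last by apply: divr_gt0; lra.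
  by rewrite (_ : sigma%:R / 2 * (2 / sigma%:R) = 1); last by field.
set T := q ^+ (2 * m).
have T0 : 0 <= T by rewrite /T exprM exprn_ge0 // sqr_ge0.
have T1 : T <= 1.
  have Hq2 : q ^+ 2 = r ^+ 2 by rewrite /r real_normK ?num_real.
  by rewrite /T exprM exprn_ile1 ?sqr_ge0 // Hq2 exprn_ile1.
set pp := p * (1 - p).
have pp0 : 0 <= pp.
  rewrite /pp /p; apply: mulr_ge0; [apply: divr_ge0; lra|].
  rewrite subr_ge0 ler_pdivrMr; lra.
have pp1 : pp <= 1 / 4.
  have := sqr_ge0 (p - 1/2); rewrite /pp expr2 => H; nra.
have m0 : (0 : rat) <= m%:R by rewrite ler0n.
have Hu2 : -ru <= u <= ru by rewrite -ler_norml Hu.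
case/andP: Hu2 => Hu1 Hu2.
have B1 : m%:R * pp * u <= m%:R * pp * ru by apply: ler_wpM2l => //; apply: mulr_ge0.
have B2 : - (m%:R * pp * ru) <= m%:R * pp * u.
  by rewrite -mulrN; apply: ler_wpM2l => //; apply: mulr_ge0.
have B3 : m%:R * pp * ru <= sigma%:R / 8.
  rewrite -mulrA (mulrC pp) mulrA.
  apply: (le_trans (ler_wpM2l (mulr_ge0 m0 ru0) pp1)). lra.
have -> : m%:R * p * (1 - p) / 4 - m%:R * p * (1 - p) * u / 2 + (1 - T) / 16 -
  m%:R * p * (1 - p) / 4 = - (m%:R * pp * u) / 2 + (1 - T) / 16 by rewrite /pp; ring.
rewrite ler_norml; apply/andP; split; lra.
Qed.
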